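(* Let $X\subseteq \mathbb{P}^1\times\mathbb{P}^1\times\mathbb{P}^1$ be a Ferrers variety of lines and $H_X$ the Hilbert function of $R/I_X$. Then, for all $(i,j,k)\in\mathbb N^3$, $$\Delta H_X(i,j,k)=\begin{cases}0 & \text{if } (i,j,k)\succeq (a,b,c) \text{ for some } (a,b,c)\in\hat D(X),\\ 1 & \text{otherwise.}\end{cases}$$
   Context: $R=K[x_{1,0},x_{1,1},x_{2,0},x_{2,1},x_{3,0},x_{3,1}]$ ($K$ algebraically closed, characteristic zero) trigraded by $\deg x_{i,j}=\mathbf e_i$, coordinate ring of $\mathbb{P}^1\times\mathbb{P}^1\times\mathbb{P}^1$. $\preceq$ is the componentwise partial order on $\mathbb N^3$. A variety of lines is $X= \bigcup_{(i,j)\in U_3(X)} \mathcal{L}(A_i,B_j)\cup\bigcup_{(i,k)\in U_2(X)} \mathcal{L}(A_i,C_k)\cup \bigcup_{(j,k)\in U_1(X)} \mathcal{L}(B_j,C_k)$, where $A_1,\ldots,A_{d_1}$, $B_1,\ldots,B_{d_2}$, $C_1,\ldots,C_{d_3}$ are linear forms of degrees $(1,0,0),(0,1,0),(0,0,1)$ defining the distinct hyperplanes containing some line of $X$, $\mathcal L(F,G)$ is the line defined by $(F,G)$, $U_3(X)\subseteq[d_1]\times[d_2]$, $U_2(X)\subseteq[d_1]\times[d_3]$, $U_1(X)\subseteq[d_2]\times[d_3]$. Its ideal is $I_X=\bigcap_{U_3(X)} (A_i,B_j)\cap\bigcap_{U_2(X)} (A_i,C_k)\cap\bigcap_{U_1(X)}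 (B_j,C_k)$. $X$ is a Ferrers variety of lines if, for this labeling, each $U_h(X)$ is downward closed: $(u,v)\in U_h(X)\Rightarrow (u',v')\in U_h(X)$ for all $1\le u'\le u$, $1\le v'\le v$. With $X_h$ the union of the lines indexed by $U_h(X)$, let $D_3(X)$, $D_2(X)$, $D_1(X)$ be the sets of tridegrees of minimal generators of $I_{X_3}$ (of form $(a,b,0)$), $I_{X_2}$ (of form $(a,0,c)$), $I_{X_1}$ (of form $(0,b,c)$); $D(X)=\{(\max\{a_3,a_2\},\max\{b_3,b_1\},\max\{c_1,c_2\}) : (a_3,b_3,0)\in D_3(X),(a_2,0,c_2)\in D_2(X),(0,b_1,c_1)\in D_1(X)\}$ and $\hat D(X)$ its set of minimal elements for $\preceq$. The Hilbert function is $H_X(i,j,k)=\dim_K R_{i,j,k}-\dim_K (I_X)_{i,j,k}$, with $H_X(i,j,k)=0$ if some coordinate is negative, and $\Delta H_X(i,j,k)=\sum_{(0,0,0)\preceq(l,m,n)\preceq(1,1,1)}(-1)^{l+m+n}H_X(i-l,j-m,k-n)$. *)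

(* Defs.v *)
From HB Require Import structures.
From mathcomp Require Import all_boot all_algebra.
From mathcomp Require Import mpoly.
From Stdlib Require Import ClassicalEpsilon.

Set Implicit Arguments.
Unset Strict Implicit.
Unset Printing Implicit Defensive.

Import GRing.Theory.
Local Open Scope ring_scope.

Notation tri := (nat * nat * nat)%type.

Definition tle (a b : tri) : bool :=
  [&& (a.1.1 <= b.1.1)%N, (a.1.2 <= b.1.2)%N & (a.2 <= b.2)%N].

Section Defs.
Variable K : fieldType.
Local Notation P := {mpoly K[6]}.

(* R = K[x_{1,0},x_{1,1},x_{2,0},x_{2,1},x_{3,0},x_{3,1}];
   x_{i+1,j} is the variable 'X_(2i+j)  (i : 'I_3, j : 'I_2). *)
Definition xvar (i : 'I_3) (j : 'I_2) : P := 'X_(inord (2 * i + j)).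

Definition mtdeg (m : 'X_{1..6}) : tri :=
  (m (inord 0) + m (inord 1), m (inord 2) + m (inord 3),
   m (inord 4) + m (inord 5))%N.

(* p is trihomogeneous of tridegree d (0 is homogeneous of every degree);
   the set of such p is R_d *)
Definition trihomog (d : tri) (p : P) : Prop :=
  forall m, m \in msupp p -> mtdeg m = d.

Definition lin_form (i : 'I_3) (F : P) : Prop :=
  exists c0 c1 : K, (c0 != 0 \/ c1 != 0) /\
    F = c0 *: xvar i ord0 + c1 *: xvar i ord_max.

Definition in_ideal (s : seq P) (p : P) : Prop :=
  exists c : 'I_(size s) -> P, p = \sum_(k < size s) c k * s`_k.

(* ideal of a union of lines L(F_u, G_v), (u,v) in U :
   intersection of the ideals (F_u, G_v) *)
Definition lines_ideal m n (F : 'I_m -> P) (G : 'I_n -> P)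
  (U : {set 'I_m * 'I_n}) (p : P) : Prop :=
  forall u, u \in U -> in_ideal [:: F u.1; G u.2] p.

(* K-dimension of a K-subspace S of R (0 if infinite dimensional) *)
Definition free_in (S : P -> Prop) n (v : 'I_n -> P) : Prop :=
  (forall i, S (v i)) /\
  (forall c : 'I_n -> K, \sum_(i < n) c i *: v i = 0 -> forall i, c i = 0).
Definition has_free (S : P -> Prop) n : Prop := exists v : 'I_n -> P, free_in S v.
Definition dimK (S : P -> Prop) : nat :=
  match excluded_middle_informative
          (exists n, has_free S n /\ ~ has_free S n.+1) with
  | left H => proj1_sig (constructive_indefinite_description _ H)
  | right _ => 0%N
  end.

Definition hilb (I : P -> Prop) (d : tri) : int :=
  (dimK (trihomog d))%:Z - (dimK (fun p => trihomog d p /\ I p))%:Z.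

(* H extended by 0 at points with a negative coordinate:
   value at (i-l, j-m, k-n) *)
Definition hilb_sh (I : P -> Prop) (d : tri) (l m n : nat) : int :=
  if [&& (l <= d.1.1)%N, (m <= d.1.2)%N & (n <= d.2)%N]
  then hilb I (d.1.1 - l, d.1.2 - m, d.2 - n)%N else 0.

Definition DeltaH (I : P -> Prop) (d : tri) : int :=
  \sum_(l < 2) \sum_(m < 2) \sum_(n < 2)
     (-1) ^+ (l + m + n) * hilb_sh I d l m n.

(* d is the tridegree of a minimal generator of the ideal I: it is the
   tridegree of an element of a minimal (irredundant) system of
   trihomogeneous generators of I *)
Definition min_gen_deg (I : P -> Prop) (d : tri) : Prop :=
  exists s : seq P,
    [/\ forall k : 'I_(size s), exists e, trihomog e s`_k,
        forall p, I p <-> in_ideal s p,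
        forall k : 'I_(size s), ~ in_ideal (take k s ++ drop k.+1 s) s`_k &
        exists k : 'I_(size s), trihomog d s`_k].

End Defs.

Definition DX (D3 D2 D1 : tri -> Prop) (d : tri) : Prop :=
  exists a3 b3 a2 c2 b1 c1,
    [/\ D3 (a3, b3, 0%N), D2 (a2, 0%N, c2), D1 (0%N, b1, c1) &
        d = (maxn a3 a2, maxn b3 b1, maxn c1 c2)].

Definition minimal_elts (D : tri -> Prop) (d : tri) : Prop :=
  D d /\ forall e, D e -> tle e d -> e = d.

Definition down_closed m n (U : {set 'I_m * 'I_n}) : Prop :=
  forall u v : 'I_m * 'I_n,
    u \in U -> (v.1 <= u.1)%N -> (v.2 <= u.2)%N -> v \in U.

(* A_1..A_d1, B_1..B_d2, C_1..C_d3 are linear forms of degrees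
   (1,0,0),(0,1,0),(0,0,1) defining distinct hyperplanes, each containing
   some line of X (indices are 0-based here). *)
Definition var_of_lines (K : fieldType) d1 d2 d3
  (A : 'I_d1 -> {mpoly K[6]}) (B : 'I_d2 -> {mpoly K[6]})
  (C : 'I_d3 -> {mpoly K[6]})
  (U3 : {set 'I_d1 * 'I_d2}) (U2 : {set 'I_d1 * 'I_d3})
  (U1 : {set 'I_d2 * 'I_d3}) : Prop :=
  [/\ (forall i, lin_form 0 (A i)) /\ (forall j, lin_form 1 (B j))
        /\ (forall k, lin_form 2 (C k)),
      (forall i i', i != i' -> ~ exists c : K, A i = c *: A i')
        /\ (forall j j', j != j' -> ~ exists c : K, B j = c *: B j')
        /\ (forall k k', k != k' -> ~ exists c : K, C k = c *: C k') &
      (forall i, (exists j, (i, j) \in U3) \/ (exists k, (i, k) \in U2))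
        /\ (forall j, (exists i, (i, j) \in U3) \/ (exists k, (j, k) \in U1))
        /\ (forall k, (exists i, (i, k) \in U2) \/ (exists j, (j, k) \in U1))].

(* Main.v *)
Require Import Defs.
From HB Require Import structures.
From mathcomp Require Import all_boot all_algebra.
From mathcomp Require Import mpoly.
From mathcomp Require Import ring zify.
From Stdlib Require Import ClassicalEpsilon Classical.
Set Implicit Arguments.
Unset Strict Implicit.
Unset Printing Implicit Defensive.
Import GRing.Theory.
Local Open Scope ring_scope.


Lemma inord6 k : (k < 6)%N -> nat_of_ord (inord k : 'I_6) = k.
Proof. by move=> h; rewrite inordK. Qed.

Lemma eq_inord6 a b : (a < 6)%N -> (b < 6)%N ->
  ((inord a : 'I_6) == inord b) = (a == b).
Proof. by move=> ha hb; rewrite -val_eqE /= !inord6. Qed.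

Definition tadd (a b : tri) : tri := (a.1.1 + b.1.1, a.1.2 + b.1.2, a.2 + b.2)%N.
Definition tc (y : tri) (h : nat) : nat :=
  match h with 0 => y.1.1 | 1 => y.1.2 | _ => y.2 end.
Definition dirdeg (h n : nat) : tri :=
  ((if h == 0 then n else 0), (if h == 1 then n else 0), (if h == 2 then n else 0))%N.


Section S_A.
Variable K : fieldType.
Local Notation P := {mpoly K[6]}.

Lemma mtdegD6 (m1 m2 : 'X_{1..6}) : mtdeg (m1 + m2)%MM = tadd (mtdeg m1) (mtdeg m2).
Proof. by rewrite /mtdeg /tadd !mnmDE /=; congr (_, _, _); lia. Qed.

Lemma mtdeg0 : mtdeg (0%MM : 'X_{1..6}) = (0, 0, 0)%N.
Proof. by rewrite /mtdeg !mnm0E. Qed.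

Lemma mtdegU (h j : nat) : (h < 3)%N -> (j < 2)%N ->
  mtdeg (U_(inord (2 * h + j)) : 'X_{1..6})%MM = dirdeg h 1.
Proof.
move=> hh hj; rewrite /mtdeg /dirdeg !mnm1E !eq_inord6 //; try lia.
by case: h hh => [|[|[|h]]] // _; case: j hj => [|[|j]].
Qed.

Lemma th0 d : trihomog d (0 : P).
Proof. by move=> m; rewrite msupp0. Qed.

Lemma thD d (p q : P) : trihomog d p -> trihomog d q -> trihomog d (p + q).
Proof. by move=> hp hq m /msuppD_le; rewrite mem_cat => /orP [/hp|/hq]. Qed.

Lemma thZ d c (p : P) : trihomog d p -> trihomog d (c *: p).
Proof. by move=> hp m /msuppZ_le /hp. Qed.

Lemma thN d (p : P) : trihomog d p -> trihomog d (- p).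
Proof. by move=> hp m; rewrite (perm_mem (msuppN p)) => /hp. Qed.

Lemma thB d (p q : P) : trihomog d p -> trihomog d q -> trihomog d (p - q).
Proof. by move=> hp hq; apply: thD => //; apply: thN. Qed.

Lemma th_sum d I (r : seq I) (Q : pred I) (F : I -> P) :
  (forall i, Q i -> trihomog d (F i)) -> trihomog d (\sum_(i <- r | Q i) F i).
Proof. by move=> h; apply: (big_ind (trihomog d)) => //; [apply: th0| apply: thD]. Qed.

Lemma thM d1 d2 (p q : P) : trihomog d1 p -> trihomog d2 q ->
  trihomog (tadd d1 d2) (p * q).
Proof.
move=> hp hq m /msuppM_le /allpairsP [[m1 m2] /= [h1 h2 ->]].
by rewrite mtdegD6 (hp _ h1) (hq _ h2).
Qed.

Lemma th1 : trihomog (0, 0, 0)%N (1 : P).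
Proof. by move=> m; rewrite msupp1 inE => /eqP ->; rewrite mtdeg0. Qed.

Lemma thX (m : 'X_{1..6}) : trihomog (mtdeg m) ('X_[m] : P).
Proof. by move=> m'; rewrite msuppX inE => /eqP ->. Qed.

Definition tcomp (d : tri) (p : P) : P :=
  \sum_(m <- msupp p | mtdeg m == d) p@_m *: 'X_[m].

Lemma tcomp_coef d p m : (tcomp d p)@_m = if mtdeg m == d then p@_m else 0.
Proof.
rewrite /tcomp raddf_sum /=.
rewrite (eq_bigr (fun m' => if m' == m then p@_m else 0)); last first.
  by move=> m' _; rewrite mcoeffZ mcoeffX; case: eqP => [->|]; rewrite ?mulr1 ?mulr0.
rewrite big_mkcond /=.
have [mp|mp] := boolP (m \in msupp p).
  rewrite (bigD1_seq m) ?msupp_uniq //= eqxx big1 ?addr0.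
    by case: ifP.
  by move=> m' /negbTE ->; case: ifP.
rewrite big1_seq; first by move: mp; rewrite -mcoeff_eq0 => /eqP ->; case: ifP.
move=> m' /andP [_ m'p]; case: (m' =P m) => [e|]; last by case: ifP.
by move: mp; rewrite -e m'p.
Qed.

Lemma tcompD d p q : tcomp d (p + q) = tcomp d p + tcomp d q.
Proof. apply/mpolyP => m; rewrite mcoeffD !tcomp_coef mcoeffD; case: ifP => //; by rewrite addr0. Qed.

Lemma tcompZ d c p : tcomp d (c *: p) = c *: tcomp d p.
Proof. apply/mpolyP => m; rewrite mcoeffZ !tcomp_coef mcoeffZ; case: ifP => //; by rewrite mulr0. Qed.

Lemma tcomp0 d : tcomp d 0 = 0.
Proof. apply/mpolyP => m; rewrite tcomp_coef mcoeff0; by case: ifP. Qed.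

Lemma tcomp_sum d I (r : seq I) (Q : pred I) (F : I -> P) :
  tcomp d (\sum_(i <- r | Q i) F i) = \sum_(i <- r | Q i) tcomp d (F i).
Proof.
apply: (big_ind2 (fun a b => tcomp d a = b)); first exact: tcomp0.
  by move=> a b c e <- <-; rewrite tcompD.
by [].
Qed.

Lemma tcomp_id d p : trihomog d p -> tcomp d p = p.
Proof.
move=> hp; apply/mpolyP => m; rewrite tcomp_coef; case: eqP => // ne.
apply/esym/eqP; rewrite mcoeff_eq0; apply/negP => /hp; done.
Qed.

Lemma tcomp_ne d e p : trihomog e p -> e <> d -> tcomp d p = 0.
Proof.
move=> hp ne; apply/mpolyP => m; rewrite tcomp_coef mcoeff0; case: eqP => // ed.
apply/eqP; rewrite mcoeff_eq0; apply/negP => /hp; congruence.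
Qed.

Lemma th_tcomp d p : trihomog d (tcomp d p).
Proof.
move=> m; rewrite mcoeff_msupp tcomp_coef; case: (mtdeg m =P d) => // _; by rewrite eqxx.
Qed.

Lemma tcomp_decomp p : p = \sum_(e <- undup (map mtdeg (msupp p))) tcomp e p.
Proof.
apply/mpolyP => m; rewrite raddf_sum /=.
rewrite (eq_bigr (fun e => if mtdeg m == e then p@_m else 0)); last by move=> e _; rewrite tcomp_coef.
have [mp|mp] := boolP (m \in msupp p).
  have me : mtdeg m \in undup (map mtdeg (msupp p)) by rewrite mem_undup map_f.
  rewrite (bigD1_seq (mtdeg m)) ?undup_uniq //= eqxx big1 ?addr0 //.
  by move=> e; rewrite eq_sym => /negbTE ->.
move: mp; rewrite -mcoeff_eq0 => /eqP ->; rewrite big1 //.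
by move=> e _; case: ifP.
Qed.

Lemma tcompM d e c (G : P) : trihomog e G ->
  tcomp d (c * G) = (\sum_(m <- msupp c | tadd (mtdeg m) e == d) c@_m *: 'X_[m]) * G.
Proof.
move=> hG; rewrite {1}(mpolyE c) mulr_suml tcomp_sum [RHS]mulr_suml [RHS]big_mkcond /=.
apply: eq_bigr => m _; rewrite -scalerAl tcompZ.
have th := thM (thX (m:=m)) hG.
case: eqP => E; first by rewrite tcomp_id -?E // scalerAl.
by rewrite (tcomp_ne th E) scaler0.
Qed.

Lemma ii0 s : in_ideal s (0 : P).
Proof. by exists (fun _ => 0); rewrite big1 // => k _; rewrite mul0r. Qed.

Lemma iiD s (p q : P) : in_ideal s p -> in_ideal s q -> in_ideal s (p + q).
Proof.
move=> [c ->] [c' ->]; exists (fun k => c k + c' k).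
by rewrite -big_split; apply: eq_bigr => k _; rewrite mulrDl.
Qed.

Lemma iiM s (r p : P) : in_ideal s p -> in_ideal s (r * p).
Proof.
move=> [c ->]; exists (fun k => r * c k).
by rewrite mulr_sumr; apply: eq_bigr => k _; rewrite mulrA.
Qed.

Lemma iiZ s c (p : P) : in_ideal s p -> in_ideal s (c *: p).
Proof. by move=> h; rewrite -mul_mpolyC; apply: iiM. Qed.

Lemma iiN s (p : P) : in_ideal s p -> in_ideal s (- p).
Proof. by move=> h; rewrite -scaleN1r; apply: iiZ. Qed.

Lemma ii_sum s I (r : seq I) (Q : pred I) (F : I -> P) :
  (forall i, Q i -> in_ideal s (F i)) -> in_ideal s (\sum_(i <- r | Q i) F i).
Proof. by move=> h; apply: (big_ind (in_ideal s)) => //; [apply: ii0| apply: iiD]. Qed.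

Lemma ii_mem s (x : P) : x \in s -> in_ideal s x.
Proof.
move=> xs; have hi : (index x s < size s)%N by rewrite index_mem.
exists (fun k => if (k : nat) == index x s then 1 else 0).
rewrite (bigD1 (Ordinal hi)) //= eqxx mul1r nth_index // big1 ?addr0 //.
move=> k; rewrite -val_eqE /= => /negbTE ->; by rewrite mul0r.
Qed.

Lemma ii_trans s1 s2 (p : P) : (forall x, x \in s1 -> in_ideal s2 x) ->
  in_ideal s1 p -> in_ideal s2 p.
Proof.
move=> h [c ->]; apply: ii_sum => k _; apply: iiM; apply: h; exact: mem_nth.
Qed.

Lemma ii_pair (F G p : P) : in_ideal [:: F; G] p <-> exists a b, p = a * F + b * G.
Proof.
split.
  by move=> [c ->]; rewrite !big_ord_recl big_ord0 addr0 /=; eexists; eexists; reflexivity.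
move=> [a [b ->]]; exists (fun k : 'I_2 => if (k : nat) == 0%N then a else b).
by rewrite !big_ord_recr big_ord0 /= add0r.
Qed.

End S_A.


Notation Bx d := ('I_(d.1.1).+1 * 'I_(d.1.2).+1 * 'I_(d.2).+1)%type.
Definition tof d (x : Bx d) : tri := (x.1.1 : nat, x.1.2 : nat, x.2 : nat).

Lemma card_Bx d : #|{: Bx d}| = ((d.1.1).+1 * (d.1.2).+1 * (d.2).+1)%N.
Proof. by rewrite !card_prod !card_ord. Qed.

Lemma tof_inj d : injective (@tof d).
Proof.
move=> [[a b] c] [[a' b'] c'] [ha hb hc].
by rewrite (ord_inj ha) (ord_inj hb) (ord_inj hc).
Qed.

Definition mon (d : tri) (x : Bx d) : 'X_{1..6} :=
  [multinom (nth 0%N [:: (x.1.1 : nat); (d.1.1 - x.1.1)%N; (x.1.2 : nat);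
       (d.1.2 - x.1.2)%N; (x.2 : nat); (d.2 - x.2)%N] i) | i < 6].

Lemma ord6_cases (i : 'I_6) :
  i = inord 0 \/ i = inord 1 \/ i = inord 2 \/ i = inord 3 \/ i = inord 4 \/ i = inord 5.
Proof.
case: i => [[|[|[|[|[|[|i]]]]]] hi] //;
 [left|right;left|right;right;left|do 3 right; left|do 4 right; left|do 5 right];
 by apply: val_inj; rewrite /= inord6.
Qed.

Lemma mtdeg_inv d (m : 'X_{1..6}) : mtdeg m = d -> exists x : Bx d, m = mon x.
Proof.
move=> <-; rewrite /mtdeg /=.
have h0 : (m (inord 0) < (m (inord 0) + m (inord 1)).+1)%N by lia.
have h2 : (m (inord 2) < (m (inord 2) + m (inord 3)).+1)%N by lia.
have h4 : (m (inord 4) < (m (inord 4) + m (inord 5)).+1)%N by lia.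
exists (Ordinal h0, Ordinal h2, Ordinal h4).
apply/mnmP => i; rewrite mnmE /=.
by case: (ord6_cases i) => [|[|[|[|[|]]]]] ->; rewrite inord6 //=; lia.
Qed.

Section S_B.
Variable K : fieldType.
Local Notation P := {mpoly K[6]}.

Lemma has_free_le (S : P -> Prop) n m : has_free S n -> (m <= n)%N -> has_free S m.
Proof.
move=> [v [hS hf]] le.
exists (fun i : 'I_m => v (widen_ord le i)); split => [i|c hc i]; first exact: hS.
pose c' := fun j : 'I_n => if insub (val j) is Some i then c i else 0.
have E : \sum_(j < n) c' j *: v j = 0.
  rewrite (bigID (fun j : 'I_n => (j < m)%N)) /= big_ord_narrow.
  rewrite [X in _ + X]big1 ?addr0.
    by rewrite -[RHS]hc; apply: eq_bigr => k _; rewrite /c' /= valK.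
  by move=> j /negbTE hj; rewrite /c' insubF // scale0r.
by have := hf c' E (widen_ord le i); rewrite /c' /= valK.
Qed.

Lemma dimK_eq (S : P -> Prop) n : has_free S n -> ~ has_free S n.+1 -> dimK S = n.
Proof.
move=> h1 h2; rewrite /dimK; case: excluded_middle_informative => [H|H]; last first.
  by exfalso; apply: H; exists n.
case: (constructive_indefinite_description _ H) => m /= [hm1 hm2].
have [lt|gt|eq] := ltngtP m n.
- by exfalso; apply: hm2; apply: has_free_le h1 _.
- by exfalso; apply: h2; apply: has_free_le hm1 _.
- done.
Qed.

Lemma free_fin (S : P -> Prop) (J : finType) (v : J -> P) :
  (forall j, S (v j)) ->
  (forall c : J -> K, \sum_j c j *: v j = 0 -> forall j, c j = 0) ->
  has_free S #|{: J}|.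
Proof.
move=> hS hf; exists (fun i => v (enum_val i)); split => [i|c hc i]; first exact: hS.
have := hf (fun j => c (enum_rank j)) _ (enum_val i); rewrite enum_valK; apply.
rewrite -[RHS]hc (reindex (@enum_val J predT)) /=; last first.
  by exists enum_rank => x _; [exact: enum_valK | exact: enum_rankK].
by apply: eq_bigr => k _; rewrite enum_valK.
Qed.

Lemma free_bound d n : has_free (@trihomog K d) n -> (n <= #|{: Bx d}|)%N.
Proof.
move=> [v [hS hf]].
pose M : 'M[K]_(n, #|{: Bx d}|) := \matrix_(r, col) (v r)@_(mon (enum_val col)).
suff rf : row_free M by have := rank_leq_col M; rewrite (eqP rf).
rewrite -kermx_eq0; apply/eqP/row_matrixP => i; rewrite row0.
set u := row i (kermx M).
have uM : u *m M = 0 by apply/sub_kermxP; exact: row_sub.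
apply/rowP => r; rewrite [RHS]mxE; move: r.
apply: (hf (fun r => u 0 r)).
apply/mpolyP => m; rewrite mcoeff0 raddf_sum /=.
under eq_bigr do rewrite mcoeffZ.
have [md|md] := eqVneq (mtdeg m) d.
  have [x ->] := mtdeg_inv md.
  move/matrixP: uM => /(_ 0 (enum_rank x)); rewrite !mxE => E; rewrite -[RHS]E.
  apply: eq_bigr => r' _; rewrite [M _ _]mxE; congr (_ * (v r')@_(mon _)); apply: esym; exact: enum_rankK.
rewrite big1 // => r' _.
have : m \notin msupp (v r') by apply/negP => /hS hm; move: md; rewrite hm eqxx.
by rewrite -mcoeff_eq0 => /eqP ->; rewrite mulr0.
Qed.

Lemma span_max (S : P -> Prop) n (v : 'I_n -> P) (F : P) :
  free_in S v -> ~ has_free S n.+1 -> S F ->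
  exists c : 'I_n -> K, F = \sum_(i < n) c i *: v i.
Proof.
move=> [hS hf] hn hF; apply: Classical_Prop.NNPP => hne; apply: hn.
pose w := fun i : 'I_n.+1 => if unlift ord_max i is Some j then v j else F.
have wl : forall j : 'I_n, w (widen_ord (leqnSn n) j) = v j.
  move=> j; have -> : widen_ord (leqnSn n) j = lift ord_max j.
    by apply: ord_inj; rewrite lift_max.
  by rewrite /w liftK.
have wm : w ord_max = F by rewrite /w unlift_none.
exists w; split => [i|c hc].
  by rewrite /w; case: unlift.
move: hc; rewrite big_ord_recr /= wm.
under eq_bigr do rewrite wl.
have [c0|c0] := eqVneq (c ord_max) 0.
  rewrite c0 scale0r addr0 => /hf h i.
  case: (unliftP ord_max i) => [j ->|->] //.
  by rewrite -(h j); congr c; apply: ord_inj; rewrite lift_max.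
move=> E; exfalso; apply: hne.
exists (fun i => - c (widen_ord (leqnSn n) i) / c ord_max).
have : F = - (c ord_max)^-1 *: \sum_(i < n) c (widen_ord (leqnSn n) i) *: v i.
  rewrite scaleNr -scalerN.
  have -> : - \sum_(i < n) c (widen_ord (leqnSn n) i) *: v i = c ord_max *: F.
    by apply/eqP; rewrite eq_sym -addr_eq0 addrC E.
  by rewrite scalerA mulVf // scale1r.
move=> ->; rewrite scaler_sumr; apply: eq_bigr => i _.
by rewrite scalerA mulrC mulNr mulrN.
Qed.

End S_B.


Lemma dirdeg0 h : dirdeg h 0 = (0, 0, 0)%N.
Proof. by rewrite /dirdeg; case: ifP; case: ifP; case: ifP. Qed.

Lemma dirdegS h n : tadd (dirdeg h n) (dirdeg h 1) = dirdeg h n.+1.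
Proof. rewrite /dirdeg /tadd /=; congr (_, _, _); case: ifP => _; lia. Qed.

Lemma dirdeg3 a b c : tadd (tadd (dirdeg 0 a) (dirdeg 1 b)) (dirdeg 2 c) = (a, b, c).
Proof. by rewrite /dirdeg /tadd /= !addn0 !add0n. Qed.

Definition wt (x : tri) := (x.1.1 + x.1.2 + x.2)%N.

Section S_C.
Variable K : fieldType.
Local Notation P := {mpoly K[6]}.
Variable pt : nat -> nat -> K * K.

Definition xv (h j : nat) : P := 'X_(inord (2 * h + j)).
Definition ell (h u : nat) : P := (pt h u).2 *: xv h 0 - (pt h u).1 *: xv h 1.
Definition dt (p q : K * K) : K := p.2 * q.1 - p.1 * q.2.
Definition ev (y : tri) : 'I_6 -> K :=
  fun i => let q := pt (i %/ 2) (tc y (i %/ 2)) in if odd i then q.2 else q.1.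

Definition fN h i a u := if (u < a)%N then ell h u else ell h i.+1.
Definition N h i a : P := \prod_(0 <= u < i) fN h i a u.
Definition NN (d x : tri) : P := N 0 d.1.1 x.1.1 * N 1 d.1.2 x.1.2 * N 2 d.2 x.2.

Hypothesis PT : forall h, (h < 3)%N -> forall u w, u != w -> dt (pt h u) (pt h w) != 0.

Lemma dtxx p : dt p p = 0.
Proof. by rewrite /dt mulrC subrr. Qed.

Lemma ev_xv y h j : (h < 3)%N -> (j < 2)%N ->
  (xv h j).@[ev y] = if j == 1%N then (pt h (tc y h)).2 else (pt h (tc y h)).1.
Proof.
move=> hh hj; rewrite /xv mevalXU /ev inord6; last by lia.
by case: h hh => [|[|[|]]] //= _; case: j hj => [|[|]].
Qed.

Lemma ev_ell y h u : (h < 3)%N -> (ell h u).@[ev y] = dt (pt h u) (pt h (tc y h)).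
Proof.
move=> hh; rewrite /ell mevalB !mevalZ !ev_xv //= /dt.
Qed.

Lemma ev_N y h i a : (h < 3)%N -> (N h i a).@[ev y] =
  \prod_(0 <= u < i) (if (u < a)%N then dt (pt h u) (pt h (tc y h))
                      else dt (pt h i.+1) (pt h (tc y h))).
Proof.
move=> hh; rewrite /N rmorph_prod; apply: eq_bigr => u _.
by rewrite /fN; case: ifP => _; apply: ev_ell.
Qed.

Lemma N_ev0 y h i a : (h < 3)%N -> (tc y h < a)%N -> (a <= i)%N -> (N h i a).@[ev y] = 0.
Proof.
move=> hh lt le; rewrite ev_N //.
rewrite (bigD1_seq (tc y h)) /= ?mem_index_iota ?iota_uniq //; last by lia.
by rewrite lt dtxx mul0r.
Qed.

Lemma N_evnz y h i a : (h < 3)%N -> tc y h = a -> (a <= i)%N -> (N h i a).@[ev y] != 0.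
Proof.
move=> hh e le; rewrite ev_N // prodf_seq_neq0; apply/allP => u _ /=.
case: ifP => lt; apply: PT => //; apply/eqP; lia.
Qed.

Lemma NN_ev (d x y : tri) : (NN d x).@[ev y] =
  (N 0 d.1.1 x.1.1).@[ev y] * (N 1 d.1.2 x.1.2).@[ev y] * (N 2 d.2 x.2).@[ev y].
Proof. by rewrite /NN !mevalM. Qed.

Lemma NN_ev0 (d x y : tri) : tle x d -> ~~ tle x y -> (NN d x).@[ev y] = 0.
Proof.
case: x => [[a b] c]; case: y => [[a' b'] c']; case: d => [[i j] k].
rewrite /tle /= => /and3P [h1 h2 h3] nt; rewrite NN_ev.
have [l1|l1] := ltnP a' a; first by rewrite (N_ev0 (h:=0)) //= ?mul0r.
have [l2|l2] := ltnP b' b; first by rewrite (N_ev0 (h:=1)) //= mulr0 mul0r.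
have [l3|l3] := ltnP c' c; first by rewrite (N_ev0 (h:=2)) //= ?mulr0.
by move: nt; rewrite l1 l2 l3.
Qed.

Lemma NN_evnz (d x : tri) : tle x d -> (NN d x).@[ev x] != 0.
Proof.
case: x => [[a b] c]; case: d => [[i j] k].
rewrite /tle /= => /and3P [h1 h2 h3]; rewrite NN_ev.
by rewrite !mulf_neq0 //; apply: N_evnz.
Qed.

Lemma th_xv h j : (h < 3)%N -> (j < 2)%N -> trihomog (dirdeg h 1) (xv h j).
Proof. by move=> hh hj; rewrite /xv -(mtdegU hh hj); apply: thX. Qed.

Lemma th_ell h u : (h < 3)%N -> trihomog (dirdeg h 1) (ell h u).
Proof. by move=> hh; apply: thB; apply: thZ; apply: th_xv. Qed.

Lemma th_prod h (f : nat -> P) n : (forall u, trihomog (dirdeg h 1) (f u)) ->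
  trihomog (dirdeg h n) (\prod_(0 <= u < n) f u).
Proof.
move=> hf; elim: n => [|n IH]; first by rewrite big_geq // dirdeg0; apply: th1.
by rewrite big_nat_recr //= -dirdegS; apply: thM.
Qed.

Lemma th_N h i a : (h < 3)%N -> trihomog (dirdeg h i) (N h i a).
Proof. by move=> hh; apply: th_prod => u; rewrite /fN; case: ifP => _; apply: th_ell. Qed.

Lemma th_NN (d x : tri) : trihomog d (NN d x).
Proof.
case: d => [[i j] k].
suff H : trihomog (tadd (tadd (dirdeg 0 i) (dirdeg 1 j)) (dirdeg 2 k)) (NN (i, j, k) x)
  by rewrite dirdeg3 in H.
by apply: thM; [apply: thM|]; apply: th_N.
Qed.

Lemma tle_wt (x y : tri) : tle x y -> x != y -> (wt x < wt y)%N.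
Proof.
case: x => [[a b] c]; case: y => [[a' b'] c']; rewrite /tle /wt /= => /and3P [h1 h2 h3] ne.
have : ~ (a = a' /\ b = b' /\ c = c') by move=> [e1 [e2 e3]]; move: ne; rewrite e1 e2 e3 eqxx.
lia.
Qed.

Lemma tri_zero d (lam : Bx d -> K) (S : pred (Bx d)) :
  (forall x y : Bx d, tle (tof x) (tof y) -> y \in S -> x \in S) ->
  (forall y : Bx d, y \in S -> (\sum_x lam x *: NN d (tof x)).@[ev (tof y)] = 0) ->
  forall y, y \in S -> lam y = 0.
Proof.
move=> dc hv.
suff H : forall n (y : Bx d), (wt (tof y) < n)%N -> y \in S -> lam y = 0.
  by move=> y; apply: (H (wt (tof y)).+1).
elim=> [//|n IH] y hy yS.
have := hv y yS; rewrite raddf_sum (bigD1 y) //= big1 ?addr0.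
  rewrite mevalZ => /eqP; rewrite mulf_eq0 => /orP [/eqP //|].
  have tly : tle (tof y) d.
    by case: y {hy yS} => [[a b] c]; apply/and3P; split => /=; rewrite -ltnS ltn_ord.
  by rewrite (negbTE (NN_evnz tly)).
move=> x nxy; rewrite mevalZ.
have tlx : tle (tof x) d.
  by case: x {nxy} => [[a b] c]; apply/and3P; split => /=; rewrite -ltnS ltn_ord.
have [tl|ntl] := boolP (tle (tof x) (tof y)); last by rewrite NN_ev0 // mulr0.
have ne : tof x != tof y by apply: contra nxy => /eqP /tof_inj ->.
have := tle_wt tl ne => lt.
by rewrite (IH x) ?mul0r //; [lia | apply: dc yS].
Qed.

Lemma NN_free d (c : Bx d -> K) : \sum_x c x *: NN d (tof x) = 0 -> forall x, c x = 0.
Proof.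
move=> hc x; apply: (@tri_zero d c predT) => // y _; by rewrite hc meval0.
Qed.

Lemma free_fin_in (S : P -> Prop) (J : finType) (v : J -> P) :
  (forall j, S (v j)) ->
  (forall c : J -> K, \sum_j c j *: v j = 0 -> forall j, c j = 0) ->
  free_in S (fun i : 'I_#|{: J}| => v (enum_val i)).
Proof.
move=> hS hf; split => [i|c hc i]; first exact: hS.
have := hf (fun j => c (enum_rank j)) _ (enum_val i); rewrite enum_valK; apply.
rewrite -[RHS]hc (reindex (@enum_val J predT)) /=; last first.
  by exists enum_rank => x _; [exact: enum_valK | exact: enum_rankK].
by apply: eq_bigr => k _; rewrite enum_valK.
Qed.

Lemma dim_R d : dimK (@trihomog K d) = #|{: Bx d}|.
Proof.
apply: dimK_eq; first by apply: free_fin => [x|]; [apply: th_NN | apply: NN_free].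
by move/free_bound; rewrite ltnn.
Qed.

Lemma SPAN d (F : P) : trihomog d F -> exists lam : Bx d -> K, F = \sum_x lam x *: NN d (tof x).
Proof.
move=> hF.
have fi := @free_fin_in (trihomog d) _ (fun x : Bx d => NN d (tof x)) (fun x => @th_NN d (tof x)) (@NN_free d).
have nf : ~ @has_free K (@trihomog K d) (#|{: Bx d}|.+1).
  by move=> H; have := free_bound H; rewrite ltnn.
have [c ->] := span_max fi nf hF.
exists (fun x => c (enum_rank x)).
rewrite (reindex (@enum_val (Bx d) predT)) /=; last first.
  by exists enum_rank => x _; [exact: enum_valK | exact: enum_rankK].
by apply: eq_bigr => k _; rewrite enum_valK.
Qed.

End S_C.


Lemma tc_tadd x y h : tc (tadd x y) h = (tc x h + tc y h)%N.
Proof. by case: h => [|[|h]]. Qed.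

Lemma tc_dirdeg h h' n : (h < 3)%N -> (h' < 3)%N -> tc (dirdeg h n) h' = if h == h' then n else 0%N.
Proof. by case: h => [|[|[|]]] //; case: h' => [|[|[|]]]. Qed.

Lemma tc_tof d (y : Bx d) h : (tc (tof y) h <= tc d h)%N.
Proof. by case: h => [|[|h]] /=; rewrite -ltnS ltn_ord. Qed.

Lemma tle_tc (x y : tri) h : tle x y -> (tc x h <= tc y h)%N.
Proof. by rewrite /tle => /and3P [? ? ?]; case: h => [|[|h]]. Qed.

Lemma tle_tadd (x e : tri) : tle e (tadd x e).
Proof. by rewrite /tle /tadd /= !leq_addl. Qed.

Lemma tle_tcP (x y : tri) : (forall h, (h < 3)%N -> (tc x h <= tc y h)%N) -> tle x y.
Proof. by move=> H; rewrite /tle (H 0%N) // (H 1%N) // (H 2%N). Qed.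

Section S_Prune.
Variable K : fieldType.
Local Notation P := {mpoly K[6]}.

Lemma prune n (s : seq P) : (size s < n)%N -> (forall x, x \in s -> exists e, trihomog e x) ->
  exists s' : seq P, [/\ (forall k : 'I_(size s'), exists e, trihomog e s'`_k),
     (forall p, in_ideal s p <-> in_ideal s' p) &
     (forall k : 'I_(size s'), ~ in_ideal (take k s' ++ drop k.+1 s') s'`_k)].
Proof.
elim: n s => [//|n IH] s hs hom.
have [H|H] := classic (exists k : 'I_(size s), in_ideal (take k s ++ drop k.+1 s) s`_k); last first.
  exists s; split => //.
    by move=> k; apply: hom; apply: mem_nth.
  by move=> k hk; apply: H; exists k.
case: H => k hk.
set s1 := take k s ++ drop k.+1 s.
have sub1 : forall x, x \in s1 -> x \in s.
  by move=> x; rewrite mem_cat => /orP [/mem_take|/mem_drop].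
have sub2 : forall x, x \in s -> x \in s1 \/ x = s`_k.
  move=> x; rewrite -{1}(cat_take_drop k s) (drop_nth 0) // mem_cat inE.
  case/orP => [h|/orP [/eqP ->|h]]; [left|right|left] => //; by rewrite mem_cat h ?orbT.
have sz : (size s1 < n)%N.
  by rewrite size_cat size_take size_drop ltn_ord; have := ltn_ord k; lia.
have [s' [h1 h2 h3]] := IH s1 sz (fun x hx => hom x (sub1 x hx)).
exists s'; split => // p; rewrite -h2; split; apply: ii_trans => x hx.
  by case: (sub2 x hx) => [/ii_mem|->].
by apply: ii_mem; apply: sub1.
Qed.

End S_Prune.

Section S_D.
Variable K : fieldType.
Local Notation P := {mpoly K[6]}.
Variable pt : nat -> nat -> K * K.
Hypothesis PT : forall h, (h < 3)%N -> forall u w, u != w -> dt (pt h u) (pt h w) != 0.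

Lemma N_dvd h i a u : (u < a)%N -> (a <= i)%N -> exists q, N pt h i a = ell pt h u * q.
Proof.
move=> ua ai; rewrite /N (bigD1_seq u) /= ?mem_index_iota ?iota_uniq //; last by lia.
by rewrite /fN ua; eexists.
Qed.

Lemma N_dvd_prod h i a a' : (a' <= a)%N -> (a <= i)%N ->
  exists q, N pt h i a = (\prod_(0 <= u < a') ell pt h u) * q.
Proof.
move=> le1 le2; rewrite /N (big_cat_nat _ (n := a')) //=; last by lia.
exists (\prod_(a' <= i0 < i) fN pt h i a i0); congr (_ * _).
by apply: eq_big_nat => u /andP [_ lt]; rewrite /fN (leq_trans lt le1).
Qed.

Lemma NN_split (d x : tri) h1 h2 : (h1 < h2)%N -> (h2 < 3)%N -> exists r,
  NN pt d x = N pt h1 (tc d h1) (tc x h1) * N pt h2 (tc d h2) (tc x h2) * r.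
Proof.
rewrite /NN; case: h1 => [|[|[|]]] //; case: h2 => [|[|[|]]] // _ _ /=.
- by eexists.
- by exists (N pt 1 d.1.2 x.1.2); ring.
- by exists (N pt 0 d.1.1 x.1.1); ring.
Qed.

Lemma NN_dvd (d x : tri) h u : (h < 3)%N -> (u < tc x h)%N -> tle x d ->
  exists q, NN pt d x = ell pt h u * q.
Proof.
case: x => [[a b] c]; case: d => [[i j] k]; rewrite /tle /NN /= => hh lt /and3P [h1 h2 h3].
case: h hh lt => [|[|[|]]] // _ /= lt.
- by have [q ->] := N_dvd 0 lt h1; exists (q * N pt 1 j b * N pt 2 k c); ring.
- by have [q ->] := N_dvd 1 lt h2; exists (q * N pt 0 i a * N pt 2 k c); ring.
- by have [q ->] := N_dvd 2 lt h3; exists (q * N pt 0 i a * N pt 1 j b); ring.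
Qed.

Variables (h1 h2 : nat).
Hypothesis h12 : (h1 < h2)%N.
Hypothesis h23 : (h2 < 3)%N.
Variables (m n : nat) (F : 'I_m -> P) (G : 'I_n -> P) (U : {set 'I_m * 'I_n}).
Hypothesis hF : forall u, F u = ell pt h1 u.
Hypothesis hG : forall v, G v = ell pt h2 v.
Hypothesis dU : down_closed U.

Definition inU (a b : nat) : bool :=
  [exists u : 'I_m, exists v : 'I_n, [&& (u == a :> nat), (v == b :> nat) & ((u, v) \in U)]].

Lemma h13 : (h1 < 3)%N. Proof. exact: ltn_trans h12 h23. Qed.

Lemma inU_dc a b a' b' : inU a b -> (a' <= a)%N -> (b' <= b)%N -> inU a' b'.
Proof.
move=> /existsP [u /existsP [v /and3P [/eqP eu /eqP ev uv]]] la lb.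
have := ltn_ord u; have := ltn_ord v => ??.
have ha : (a' < m)%N by lia.
have hb : (b' < n)%N by lia.
apply/existsP; exists (Ordinal ha); apply/existsP; exists (Ordinal hb).
rewrite /= !eqxx /=; apply: (dU uv) => /=; lia.
Qed.

Lemma inU_lt a b : inU a b -> (a < m)%N /\ (b < n)%N.
Proof. by move=> /existsP [u /existsP [v /and3P [/eqP <- /eqP <- _]]]; split. Qed.

Lemma inUP a b : reflect (exists (u : 'I_m) (v : 'I_n), [/\ (u : nat) = a, (v : nat) = b & (u, v) \in U]) (inU a b).
Proof.
apply: (iffP idP).
  by move=> /existsP [u /existsP [v /and3P [/eqP eu /eqP ev uv]]]; exists u, v.
move=> [u [v [eu ev uv]]]; apply/existsP; exists u; apply/existsP; exists v.
by rewrite eu ev !eqxx.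
Qed.

Local Notation LI := (lines_ideal F G U).

Lemma G1 p y : LI p -> inU (tc y h1) (tc y h2) -> p.@[ev pt y] = 0.
Proof.
move=> hp /inUP [u [v [eu ev uv]]].
have /ii_pair [a [b ->]] := hp _ uv.
rewrite mevalD !mevalM /= hF hG !ev_ell ?h13 // -eu -ev !dtxx.
by rewrite !mulr0 addr0.
Qed.

Lemma li0 : LI 0. Proof. by move=> u _; apply: ii0. Qed.
Lemma liD p q : LI p -> LI q -> LI (p + q).
Proof. by move=> hp hq u uU; apply: iiD; [apply: hp|apply: hq]. Qed.
Lemma liM r p : LI p -> LI (r * p).
Proof. by move=> hp u uU; apply: iiM; apply: hp. Qed.
Lemma liZ c p : LI p -> LI (c *: p).
Proof. by move=> hp u uU; apply: iiZ; apply: hp. Qed.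
Lemma li_sum I (r : seq I) (Q : pred I) (f : I -> P) :
  (forall i, Q i -> LI (f i)) -> LI (\sum_(i <- r | Q i) f i).
Proof. by move=> h; apply: (big_ind LI) => //; [apply: li0 | apply: liD]. Qed.

Lemma li_F u q : LI (ell pt h1 u * q) \/ True. Proof. by right. Qed.

Lemma G2 (d x : tri) : ~~ inU (tc x h1) (tc x h2) -> tle x d -> LI (NN pt d x).
Proof.
move=> ni le [u v] uv /=.
have [l1|l1] := ltnP u (tc x h1).
  have [q ->] := NN_dvd h13 l1 le.
  by apply/ii_pair; exists q, 0; rewrite hF mul0r addr0 mulrC.
have [l2|l2] := ltnP v (tc x h2).
  have [q ->] := NN_dvd h23 l2 le.
  by apply/ii_pair; exists 0, q; rewrite hG mul0r add0r mulrC.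
exfalso; move/negP: ni; apply; apply: (inU_dc (a := u) (b := v)) => //.
by apply/inUP; exists u, v.
Qed.

Lemma li_tcomp e p : LI p -> LI (tcomp e p).
Proof.
move=> hp [u v] uv; have /ii_pair [a [b ->]] := hp _ uv.
have t1 : trihomog (dirdeg h1 1) (F u) by rewrite hF; apply: th_ell h13.
have t2 : trihomog (dirdeg h2 1) (G v) by rewrite hG; apply: th_ell h23.
rewrite tcompD (tcompM _ _ t1) (tcompM _ _ t2).
by apply/ii_pair; eexists; eexists; reflexivity.
Qed.

Definition Pi a b : P := (\prod_(0 <= u < a) ell pt h1 u) * (\prod_(0 <= v < b) ell pt h2 v).

Lemma ell_dvd_prod h u a : (u < a)%N -> exists q, \prod_(0 <= w < a) ell pt h w = ell pt h u * q.
Proof.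
by move=> ua; rewrite (bigD1_seq u) /= ?mem_index_iota ?iota_uniq //; eexists.
Qed.

Lemma Pi_in a b : ~~ inU a b -> LI (Pi a b).
Proof.
move=> ni [u v] uv /=; rewrite /Pi.
have [l1|l1] := ltnP u a.
  have [q ->] := ell_dvd_prod h1 l1.
  by apply/ii_pair; exists (q * \prod_(0 <= v < b) ell pt h2 v), 0; rewrite hF mul0r addr0; ring.
have [l2|l2] := ltnP v b.
  have [q ->] := ell_dvd_prod h2 l2.
  by apply/ii_pair; exists 0, (q * \prod_(0 <= u < a) ell pt h1 u); rewrite hG mul0r add0r; ring.
exfalso; move/negP: ni; apply; apply: (inU_dc (a := u) (b := v)) => //.
by apply/inUP; exists u, v.
Qed.

Lemma th_Pi a b : trihomog (tadd (dirdeg h1 a) (dirdeg h2 b)) (Pi a b).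
Proof. by apply: thM; apply: th_prod => u; apply: th_ell; [exact: h13 | exact: h23]. Qed.

Lemma Pi_ev a b : (Pi a b).@[ev pt (tadd (dirdeg h1 a) (dirdeg h2 b))] != 0.
Proof.
have n12 : h1 != h2 by rewrite neq_ltn h12.
have n21 : h2 != h1 by rewrite neq_ltn h12 orbT.
rewrite /Pi mevalM !rmorph_prod mulf_neq0 // prodf_seq_neq0; apply/allP => u;
  rewrite mem_index_iota => /andP [_ lt] /=; rewrite ev_ell ?h13 // tc_tadd !tc_dirdeg ?h13 //.
- rewrite eqxx (negbTE n21) addn0; apply: PT; [exact: h13 | by rewrite neq_ltn lt].
- rewrite eqxx (negbTE n12) add0n; apply: PT => //; by rewrite neq_ltn lt.
Qed.

Definition sPi : seq P :=
  [seq Pi ab.1 ab.2 | ab <- [seq ab <- [seq (a, b) | a <- iota 0 m.+1, b <- iota 0 n.+1] | ~~ inU ab.1 ab.2]].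

Lemma mem_sPi a b : (a <= m)%N -> (b <= n)%N -> ~~ inU a b -> Pi a b \in sPi.
Proof.
move=> la lb ni; apply: (map_f (fun ab => Pi ab.1 ab.2) (x := (a, b))).
rewrite mem_filter; apply/andP; split; first exact: ni.
apply/allpairsPdep; exists a, b; rewrite !mem_iota; split => //; lia.
Qed.

Lemma NN_Pi (d x : tri) a b : (a <= tc x h1)%N -> (b <= tc x h2)%N -> tle x d ->
  exists r, NN pt d x = Pi a b * r.
Proof.
move=> la lb le.
have [r0 ->] := NN_split d x h12 h23.
have [q1 ->] := N_dvd_prod h1 la (tle_tc h1 le).
have [q2 ->] := N_dvd_prod h2 lb (tle_tc h2 le).
by exists (q1 * q2 * r0); rewrite /Pi; ring.
Qed.

Lemma hom_in e q : trihomog e q -> LI q -> in_ideal sPi q.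
Proof.
move=> hq lq; have [lam E] := SPAN PT hq; rewrite E in lq *.
pose S := [pred y : Bx e | inU (tc (tof y) h1) (tc (tof y) h2)].
have z : forall y, y \in S -> lam y = 0.
  apply: (tri_zero PT (S := S)).
    move=> x y le; rewrite !inE => iy; apply: inU_dc iy _ _; exact: tle_tc.
  by move=> y yS; apply: G1.
apply: ii_sum => x _.
have [xS|xS] := boolP (x \in S); first by rewrite z // scale0r; apply: ii0.
pose a' := minn (tc (tof x) h1) m; pose b' := minn (tc (tof x) h2) n.
have ni : ~~ inU a' b'.
  apply/negP => ia; have [l1 l2] := inU_lt ia.
  have ea : a' = tc (tof x) h1 by move: l1; rewrite /a'; lia.
  have eb : b' = tc (tof x) h2 by move: l2; rewrite /b'; lia.
  by move: xS; rewrite inE -ea -eb ia.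
have le : tle (tof x) e by apply: tle_tcP => h _; exact: tc_tof.
have [r ->] := NN_Pi (geq_minl _ _ : (a' <= _)%N) (geq_minl _ _ : (b' <= _)%N) le.
by apply: iiZ; rewrite mulrC; apply: iiM; apply: ii_mem; apply: mem_sPi => //; apply: geq_minr.
Qed.

Lemma gen_eq p : LI p <-> in_ideal sPi p.
Proof.
split.
  move=> lp; rewrite (tcomp_decomp p); apply: ii_sum => e _.
  by apply: (hom_in (@th_tcomp _ e p)); apply: li_tcomp.
move=> [c ->]; apply: li_sum => k _; apply: liM.
have : sPi`_k \in sPi by apply: mem_nth.
by case/mapP => ab; rewrite mem_filter => /andP [ni _] ->; apply: Pi_in.
Qed.

Lemma MGa e : min_gen_deg LI e -> ~~ inU (tc e h1) (tc e h2).
Proof.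
move=> [s [hom gen irr [k hk]]]; apply/negP => ie.
have Lk : LI s`_k by apply/gen; apply: ii_mem; apply: mem_nth.
have [lam E] := SPAN PT hk.
have z : forall y : Bx e, lam y = 0.
  move=> y; apply: (tri_zero PT (S := predT)) => // y' _.
  rewrite -E; apply: G1 => //; apply: inU_dc ie _ _; exact: tc_tof.
apply: (irr k); rewrite E big1; first exact: ii0.
by move=> x _; rewrite z scale0r.
Qed.

Lemma MGb a b : ~~ inU a b -> exists e, [/\ min_gen_deg LI e, (tc e h1 <= a)%N, (tc e h2 <= b)%N &
  forall h, (h < 3)%N -> h != h1 -> h != h2 -> tc e h = 0%N].
Proof.
move=> ni.
pose a' := minn a m; pose b' := minn b n.
have ni' : ~~ inU a' b'.
  apply/negP => ia; have [l1 l2] := inU_lt ia.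
  have ea : a' = a by move: l1; rewrite /a'; lia.
  have eb : b' = b by move: l2; rewrite /b'; lia.
  by move: ni; rewrite -ea -eb ia.
have hom : forall x, x \in sPi -> exists e, trihomog e x.
  by move=> x /mapP [ab _ ->]; eexists; apply: th_Pi.
have [s' [hom' eqv irr']] := prune (ltnSn (size sPi)) hom.
have hPi : in_ideal s' (Pi a' b') by apply/eqv/gen_eq/Pi_in.
pose d' := tadd (dirdeg h1 a') (dirdeg h2 b').
have [k [e [he le]]] : exists k : 'I_(size s'), exists e, trihomog e s'`_k /\ tle e d'.
  apply: NNPP => H.
  move: hPi => [c Ec].
  have : Pi a' b' = 0.
    rewrite -(tcomp_id (th_Pi (a:=a') (b:=b'))) Ec tcomp_sum big1 // => k _.
    have [e he] := hom' k.
    rewrite (tcompM _ _ he) big_pred0 ?mul0r // => mm; apply/negP => /eqP E.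
    by apply: H; exists k, e; split => //; rewrite /d' -E; apply: tle_tadd.
  move/(congr1 (meval (ev pt d'))); rewrite meval0; apply/eqP; exact: Pi_ev.
have n12 : h1 != h2 by rewrite neq_ltn h12.
have n21 : h2 != h1 by rewrite neq_ltn h12 orbT.
exists e; split.
- exists s'; split => //; [by move=> p; rewrite gen_eq | by exists k].
- apply: leq_trans (tle_tc h1 le) _; rewrite /d' tc_tadd !tc_dirdeg ?h13 //.
  by rewrite eqxx (negbTE n21) addn0 geq_minl.
- apply: leq_trans (tle_tc h2 le) _; rewrite /d' tc_tadd !tc_dirdeg ?h13 //.
  by rewrite eqxx (negbTE n12) add0n geq_minl.
- move=> h hh nh1 nh2; apply/eqP; rewrite -leqn0; apply: leq_trans (tle_tc h le) _.
  by rewrite /d' tc_tadd !tc_dirdeg ?h13 // eq_sym (negbTE nh1) eq_sym (negbTE nh2).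
Qed.

End S_D.


Section S_E.
Variable K : fieldType.
Local Notation P := {mpoly K[6]}.
Hypothesis ch0 : [pchar K] =i pred0.

Lemma natr_inj (a b : nat) : (a%:R : K) = b%:R -> a = b.
Proof.
have H := (pcharf0P K).1 ch0.
wlog lt : a b / (a <= b)%N.
  by move=> W; case/orP: (leq_total a b) => /W // h /esym /h.
move=> E; apply/eqP; rewrite eqn_leq lt /=.
have : ((b - a)%N%:R : K) == 0 by rewrite natrB // E subrr.
by rewrite H subn_eq0.
Qed.

Lemma avoid (s : seq K) : exists N0, forall k, (N0 <= k)%N -> (k%:R : K) \notin s.
Proof.
elim: s => [|x s [N0 IH]]; first by exists 0%N.
have [[j hj]|nj] := classic (exists j, (j%:R : K) = x).
  exists (maxn N0 j.+1) => k hk; rewrite inE negb_or IH ?andbT; last by lia.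
  by apply/eqP => E; move: hk; rewrite -hj in E; rewrite (natr_inj E); lia.
exists N0 => k hk; rewrite inE negb_or IH // andbT.
by apply/eqP => E; apply: nj; exists k.
Qed.

Definition lf (h : nat) (p : K * K) : P := p.2 *: @xv K h 0 - p.1 *: @xv K h 1.

Lemma dt_anti (p q : K * K) : dt p q = - dt q p.
Proof. rewrite /dt; ring. Qed.

Lemma ext_dir (h : 'I_3) m (F : 'I_m -> P) :
  (forall u, lin_form h (F u)) ->
  (forall u u', u != u' -> ~ exists c : K, F u = c *: F u') ->
  exists q : nat -> K * K, (forall u w, u != w -> dt (q u) (q w) != 0) /\
     forall u : 'I_m, F u = lf h (q u).
Proof.
move=> lin dis.
pose c0 u := (F u)@_U_(inord (2 * h)); pose c1 u := (F u)@_U_(inord (2 * h + 1)).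
have hh := ltn_ord h.
have FE : forall u, F u = c0 u *: @xv K h 0 + c1 u *: @xv K h 1 /\ (c0 u != 0 \/ c1 u != 0).
  move=> u; have [a [b [nz E]]] := lin u.
  have e0 : c0 u = a.
    rewrite /c0 E mcoeffD !mcoeffZ !mcoeffXU !eq_inord6 //=; try lia.
    have -> : ((2 * h + 0)%N == (2 * h)%N) = true by rewrite addn0 eqxx.
    have -> : ((2 * h + 1)%N == (2 * h)%N) = false by apply/negbTE; lia.
    by rewrite mulr1 mulr0 addr0.
  have e1 : c1 u = b.
    rewrite /c1 E mcoeffD !mcoeffZ !mcoeffXU !eq_inord6 //=; try lia.
    have -> : ((2 * h + 0)%N == (2 * h + 1)%N) = false by apply/negbTE; lia.
    have -> : ((2 * h + 1)%N == (2 * h + 1)%N) = true by rewrite eqxx.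
    by rewrite mulr1 mulr0 add0r.
  rewrite e0 e1; split; last exact: nz.
  by rewrite E.
pose s := [seq - c0 w / c1 w | w <- enum 'I_m].
have [N0 hN] := avoid s.
pose q (u : nat) : K * K :=
  if insub u is Some u' then (- c1 u', c0 u') else (1, (N0 + u)%:R).
exists q; split; last first.
  move=> u; rewrite /q valK /lf; have [-> _] := FE u.
  by rewrite scaleNr opprK.
have oldnew : forall (u : 'I_m) (w : nat), (m <= w)%N -> dt (q u) (q w) != 0.
  move=> u w hw; rewrite /q valK insubF; last by rewrite ltnNge hw.
  rewrite /dt /= mulr1 mulNr opprK.
  have [_ nz] := FE u.
  have [z1|z1] := eqVneq (c1 u) 0.
    by rewrite z1 mul0r addr0; case: nz => //; rewrite z1 eqxx.
  apply/eqP => E; have := hN (N0 + w)%N (leq_addr _ _); apply/negP/negPn.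
  apply/mapP; exists u; first by rewrite mem_enum.
  apply: (mulIf z1); rewrite divfK //; apply/eqP.
  by rewrite -addr_eq0 mulrC addrC E.
move=> u w nuw.
have [hu|hu] := ltnP u m; have [hw|hw] := ltnP w m.
- have -> : u = Ordinal hu by [].
  have -> : w = Ordinal hw by [].
  rewrite /q !valK /dt /=.
  have [E0 nz0] := FE (Ordinal hu); have [E1 nz1] := FE (Ordinal hw).
  have nuw' : Ordinal hu != Ordinal hw by rewrite -val_eqE.
  move: E0 E1 nz0 nz1 (dis _ _ nuw').
  set a := c0 (Ordinal hu); set b := c1 (Ordinal hu); set a' := c0 (Ordinal hw); set b' := c1 (Ordinal hw).
  move=> E0 E1 nz0 nz1 D; apply/negP => /eqP E; apply: D; rewrite E0 E1.
  have E' : b * a' = a * b' by move: E; rewrite !mulrN !mulNr opprK => /eqP; rewrite addrC subr_eq0 mulrC => /eqP ->; rewrite mulrC.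
  have [z|z] := eqVneq a' 0.
    have nb' : b' != 0 by case: nz1 => //; rewrite z eqxx.
    exists (b / b'); rewrite scalerDr !scalerA z mulr0 scale0r divfK //.
    have -> : a = 0 by move: E'; rewrite z mulr0 => /esym/eqP; rewrite mulf_eq0 (negbTE nb') orbF => /eqP.
    by rewrite scale0r.
  exists (a / a'); rewrite scalerDr !scalerA divfK //; congr (_ + _ *: _).
  by apply: (mulIf z); rewrite mulrAC divfK // mulrC E'.
- exact: (oldnew (Ordinal hu)).
- by rewrite dt_anti oppr_eq0; exact: (oldnew (Ordinal hw)).
- rewrite /q !insubF ?ltnNge ?hu ?hw // /dt /= !mul1r mulr1 subr_eq0.
  by apply/eqP => /natr_inj; lia.
Qed.

End S_E.


Section S_F.
Variable K : fieldType.
Local Notation P := {mpoly K[6]}.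
Variable pt : nat -> nat -> K * K.
Hypothesis PT : forall h, (h < 3)%N -> forall u w, u != w -> dt (pt h u) (pt h w) != 0.
Variables (d1 d2 d3 : nat) (A : 'I_d1 -> P) (B : 'I_d2 -> P) (C : 'I_d3 -> P).
Variables (U3 : {set 'I_d1 * 'I_d2}) (U2 : {set 'I_d1 * 'I_d3}) (U1 : {set 'I_d2 * 'I_d3}).
Hypothesis hA : forall u, A u = ell pt 0 u.
Hypothesis hB : forall u, B u = ell pt 1 u.
Hypothesis hC : forall u, C u = ell pt 2 u.
Hypothesis dU3 : down_closed U3.
Hypothesis dU2 : down_closed U2.
Hypothesis dU1 : down_closed U1.

Definition IX (p : P) := [/\ lines_ideal A B U3 p, lines_ideal A C U2 p & lines_ideal B C U1 p].

Definition TT (x : tri) : bool :=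
  [&& ~~ inU U3 (tc x 0) (tc x 1), ~~ inU U2 (tc x 0) (tc x 2) & ~~ inU U1 (tc x 1) (tc x 2)].

Lemma TT_up x y : tle x y -> TT x -> TT y.
Proof.
move=> le /and3P [n3 n2 n1]; apply/and3P; split.
- by apply: contra n3 => i; apply: (inU_dc (isT : (0 < 1)%N) (isT : (1 < 3)%N) dU3 i); apply: tle_tc.
- by apply: contra n2 => i; apply: (inU_dc (isT : (0 < 1)%N) (isT : (1 < 3)%N) dU2 i); apply: tle_tc.
- by apply: contra n1 => i; apply: (inU_dc (isT : (0 < 1)%N) (isT : (1 < 3)%N) dU1 i); apply: tle_tc.
Qed.

Lemma IX_vanish p y : IX p -> ~~ TT y -> p.@[ev pt y] = 0.
Proof.
move=> [l3 l2 l1]; rewrite /TT !negb_and !negbK => /or3P [i|i|i].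
- exact: (G1 (isT : (0 < 1)%N) (isT : (1 < 3)%N) hA hB l3 i).
- exact: (G1 (isT : (0 < 2)%N) (isT : (2 < 3)%N) hA hC l2 i).
- exact: (G1 (isT : (1 < 2)%N) (isT : (2 < 3)%N) hB hC l1 i).
Qed.

Lemma IX_NN d x : TT x -> tle x d -> IX (NN pt d x).
Proof.
move=> /and3P [n3 n2 n1] le; split.
- exact: (G2 (isT : (0 < 1)%N) (isT : (1 < 3)%N) hA hB dU3 n3 le).
- exact: (G2 (isT : (0 < 2)%N) (isT : (2 < 3)%N) hA hC dU2 n2 le).
- exact: (G2 (isT : (1 < 2)%N) (isT : (2 < 3)%N) hB hC dU1 n1 le).
Qed.

Lemma li_lin m n (F : 'I_m -> P) (G : 'I_n -> P) U (p q : P) c :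
  lines_ideal F G U p -> lines_ideal F G U q -> lines_ideal F G U (c *: p + q).
Proof. by move=> hp hq u uU; apply: iiD; [apply: iiZ; apply: hp | apply: hq]. Qed.

Lemma IX0 : IX 0.
Proof. by split => u _; apply: ii0. Qed.

Lemma IX_lin c p q : IX p -> IX q -> IX (c *: p + q).
Proof. by move=> [a b e] [a' b' e']; split; apply: li_lin. Qed.

Lemma IX_sum I (r : seq I) (Q : pred I) (f : I -> P) (c : I -> K) :
  (forall i, Q i -> IX (f i)) -> IX (\sum_(i <- r | Q i) c i *: f i).
Proof.
move=> h; apply: (big_ind IX); first exact: IX0.
  by move=> x y hx hy; rewrite -[x]scale1r; apply: IX_lin.
by move=> i qi; rewrite -[_ *: _]addr0; apply: IX_lin; [apply: h | apply: IX0].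
Qed.

Lemma IXN p : IX p -> IX (- p).
Proof. by move=> h; rewrite -[- p]addr0 -scaleN1r; apply: IX_lin => //; apply: IX0. Qed.

Lemma tle_tof d (x : Bx d) : tle (tof x) d.
Proof. by apply: tle_tcP => h _; exact: tc_tof. Qed.

Definition ext d (Q : {pred Bx d}) (c : {x in Q} -> K) (x : Bx d) : K :=
  if insub x is Some j then c j else 0.

Lemma sub_sum d (Q : {pred Bx d}) (c : {x in Q} -> K) :
  \sum_j c j *: NN pt d (tof (val j)) = \sum_x ext c x *: NN pt d (tof x).
Proof.
rewrite [RHS](bigID (fun x => x \in Q)) /= [X in _ = _ + X]big1 ?addr0; last first.
  by move=> x xQ; rewrite /ext insubF ?scale0r //; apply/negbTE.
by rewrite [RHS]big_sub; apply: eq_bigr => j _; rewrite /ext valK.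
Qed.

Lemma sub_free d (Q : {pred Bx d}) (c : {x in Q} -> K) :
  \sum_j c j *: NN pt d (tof (val j)) = 0 -> forall j, c j = 0.
Proof.
rewrite sub_sum => /(NN_free PT) h j; have := h (val j); by rewrite /ext valK.
Qed.

Lemma dim_I d : dimK (fun p => trihomog d p /\ IX p) = #|[pred x : Bx d | TT (tof x)]|.
Proof.
apply: dimK_eq.
  have := @free_fin K (fun p => trihomog d p /\ IX p) {x in [pred x : Bx d | TT (tof x)]}
    (fun j => NN pt d (tof (val j))).
  rewrite card_sig; apply.
    move=> j; split; first exact: th_NN.
    by apply: IX_NN; [exact: (valP j) | exact: tle_tof].
  exact: sub_free.
move=> [w [hw fw]].
set Bp := [pred x : Bx d | ~~ TT (tof x)].
pose v := fun s : ('I_(#|[pred x : Bx d | TT (tof x)]|.+1) + {x in Bp})%type =>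
  match s with inl i => w i | inr j => NN pt d (tof (val j)) end.
have hf := @free_fin K (trihomog d) _ v.
have := free_bound (hf _ _).
rewrite card_sum card_ord card_sig.
have := cardC [pred x : Bx d | TT (tof x)].
set a := #|[pred x : Bx d | TT (tof x)]|.
have -> : #|[pred x | x \in Bp]| = #|[predC [pred x : Bx d | TT (tof x)]]| by apply: eq_card.
move=> <- H.
have hv : forall s, trihomog d (v s) by case=> [i|j]; [exact: (hw i).1 | exact: th_NN].
have := H hv.
suff fv : forall c, \sum_s c s *: v s = 0 -> forall s, c s = 0.
  by move=> /(_ fv); rewrite addSn ltnn.
move=> c; rewrite big_sumType /= => E s.
set G := \sum_(i < a.+1) c (inl i) *: w i.
set R := \sum_(j : {x in Bp}) c (inr j) *: NN pt d (tof (val j)).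
have IG : IX G by apply: IX_sum => i _; exact: (hw i).2.
have ER : R = - G by apply/eqP; rewrite -addr_eq0 addrC E.
have IR : IX R by rewrite ER; apply: IXN.
have z : forall x, x \in Bp -> ext (fun j => c (inr j)) x = 0.
  apply: (tri_zero PT (S := Bp)).
    by move=> x y le; rewrite !inE; apply: contra; apply: TT_up.
  by move=> y yS; rewrite -sub_sum; apply: IX_vanish IR yS.
have R0 : forall j, c (inr j) = 0 by move=> j; have := z (val j) (valP j); rewrite /ext valK.
case: s => [i|j]; last exact: R0.
apply: (fw (fun i => c (inl i))).
have R00 : R = 0 by rewrite /R big1 // => j _; rewrite R0 scale0r.
by move: E; rewrite -/G -/R R00 addr0.
Qed.

End S_F.


Definition gsum (f : nat -> nat -> nat -> int) (A B C : nat) : int :=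
  \sum_(0 <= a < A) \sum_(0 <= b < B) \sum_(0 <= c < C) f a b c.

Lemma card_box d (Q : tri -> bool) :
  (#|[pred x : Bx d | Q (tof x)]| : int) =
  gsum (fun a b c => (Q (a, b, c) : nat)%:Z) d.1.1.+1 d.1.2.+1 d.2.+1.
Proof.
rewrite /gsum big_mkord.
transitivity (\sum_(a < d.1.1.+1) \sum_(b < d.1.2.+1) \sum_(c < d.2.+1)
   ((Q (a : nat, b : nat, c : nat) : nat)%:Z)); last first.
  by apply: eq_bigr => a _; rewrite big_mkord; apply: eq_bigr => b _; rewrite big_mkord.
rewrite pair_bigA pair_bigA -sum1_card big_mkcond /= (big_morph Posz PoszD (erefl 0%:Z)).
by apply: eq_bigr => x _; rewrite inE /tof; case: (Q _).
Qed.

Lemma gsum0a f B C : gsum f 0 B C = 0.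
Proof. by rewrite /gsum big_geq. Qed.
Lemma gsum0b f A C : gsum f A 0 C = 0.
Proof. by rewrite /gsum big1 // => a _; rewrite big_geq. Qed.
Lemma gsum0c f A B : gsum f A B 0 = 0.
Proof. by rewrite /gsum big1 // => a _; rewrite big1 // => b _; rewrite big_geq. Qed.

Definition s2 (f : nat -> nat -> nat -> int) A B C : int :=
  \sum_(0 <= b < B) \sum_(0 <= c < C) f A b c.
Definition s1 (f : nat -> nat -> nat -> int) A B C : int :=
  \sum_(0 <= c < C) f A B c.

Lemma gS f A B C : gsum f A.+1 B C = gsum f A B C + s2 f A B C.
Proof. by rewrite /gsum big_nat_recr. Qed.

Lemma gSb f A B C : gsum f A B.+1 C = gsum f A B C + \sum_(0 <= a < A) s1 f a B C.
Proof.
by rewrite /gsum -big_split /=; apply: eq_bigr => a _; rewrite big_nat_recr.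
Qed.

Lemma s2S f A B C : s2 f A B.+1 C = s2 f A B C + s1 f A B C.
Proof. by rewrite /s2 big_nat_recr. Qed.

Lemma s1S f A B C : s1 f A B C.+1 = s1 f A B C + f A B C.
Proof. by rewrite /s1 big_nat_recr. Qed.

Lemma s2Sc f A B C : s2 f A B C.+1 = s2 f A B C + \sum_(0 <= b < B) f A b C.
Proof. by rewrite /s2 -big_split /=; apply: eq_bigr => b _; rewrite big_nat_recr. Qed.

Lemma tele f i j k :
  gsum f i.+1 j.+1 k.+1 - gsum f i j.+1 k.+1 - gsum f i.+1 j k.+1 - gsum f i.+1 j.+1 k
  + gsum f i j k.+1 + gsum f i j.+1 k + gsum f i.+1 j k - gsum f i j k = f i j k.
Proof.
rewrite !gS.
have e1 := s2S f i j k.+1.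
have e2 := s2S f i j k.
have e3 := s1S f i j k.
rewrite e1 e2 e3; ring.
Qed.

Section S_G.
Variable K : fieldType.
Local Notation P := {mpoly K[6]}.
Variable pt : nat -> nat -> K * K.
Hypothesis PT : forall h, (h < 3)%N -> forall u w, u != w -> dt (pt h u) (pt h w) != 0.
Variables (d1 d2 d3 : nat) (A : 'I_d1 -> P) (B : 'I_d2 -> P) (C : 'I_d3 -> P).
Variables (U3 : {set 'I_d1 * 'I_d2}) (U2 : {set 'I_d1 * 'I_d3}) (U1 : {set 'I_d2 * 'I_d3}).
Hypothesis hA : forall u, A u = ell pt 0 u.
Hypothesis hB : forall u, B u = ell pt 1 u.
Hypothesis hC : forall u, C u = ell pt 2 u.
Hypothesis dU3 : down_closed U3.
Hypothesis dU2 : down_closed U2.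
Hypothesis dU1 : down_closed U1.

Local Notation TTX := (TT U3 U2 U1).
Local Notation IXX := (IX A B C U3 U2 U1).
Definition fT := fun a b c => ((~~ TTX (a, b, c)) : nat)%:Z.

Lemma hilb_IX d : hilb IXX d = gsum fT d.1.1.+1 d.1.2.+1 d.2.+1.
Proof.
rewrite /hilb (dim_R PT) (dim_I PT hA hB hC dU3 dU2 dU1).
rewrite -(cardC [pred x : Bx d | TTX (tof x)]) PoszD addrAC subrr add0r.
rewrite -(card_box d (fun x => ~~ TTX x)); congr (Posz _); apply: eq_card => x.
Qed.

Lemma hsh d l m n : (l <= 1)%N -> (m <= 1)%N -> (n <= 1)%N ->
  hilb_sh IXX d l m n = gsum fT (d.1.1.+1 - l) (d.1.2.+1 - m) (d.2.+1 - n).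
Proof.
move=> hl hm hn; rewrite /hilb_sh.
case: ifP => [/and3P [a b c]|H].
  by rewrite hilb_IX /= !subSn.
have : [|| (d.1.1 < l)%N, (d.1.2 < m)%N | (d.2 < n)%N].
  by move/negbT: H; rewrite !negb_and -!ltnNge.
case/or3P => h.
- have -> : (d.1.1.+1 - l = 0)%N by lia.
  by rewrite gsum0a.
- have -> : (d.1.2.+1 - m = 0)%N by lia.
  by rewrite gsum0b.
- have -> : (d.2.+1 - n = 0)%N by lia.
  by rewrite gsum0c.
Qed.

Lemma DeltaH_IX d : DeltaH IXX d = fT d.1.1 d.1.2 d.2.
Proof.
rewrite /DeltaH !big_ord_recr !big_ord0 /= !add0r.
rewrite !hsh // !subn0 !subn1 /=.
rewrite ?add0n ?addn0 ?addn1 -(tele fT); ring.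
Qed.

End S_G.


Lemma tle_trans (x y z : tri) : tle x y -> tle y z -> tle x z.
Proof. by rewrite /tle => /and3P [? ? ?] /and3P [? ? ?]; apply/and3P; split; lia. Qed.

Lemma tle_refl (x : tri) : tle x x.
Proof. by rewrite /tle !leqnn. Qed.

Lemma exists_min (D : tri -> Prop) e0 : D e0 -> exists e, minimal_elts D e /\ tle e e0.
Proof.
suff H : forall n e0, (wt e0 < n)%N -> D e0 -> exists e, minimal_elts D e /\ tle e e0.
  by apply: (H (wt e0).+1).
elim=> [//|n IH] {}e0 hw he.
have [M|M] := classic (forall e, D e -> tle e e0 -> e = e0).
  by exists e0; split; [split | apply: tle_refl].
have [e [De [le ne]]] : exists e, D e /\ tle e e0 /\ e <> e0.
  apply: NNPP => H; apply: M => e De le; apply: NNPP => ne; apply: H; exists e; split => //.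
have lt : (wt e < wt e0)%N by apply: tle_wt => //; apply/eqP.
have [e' [me' le']] := IH e ltac:(lia) De.
by exists e'; split => //; apply: tle_trans le' le.
Qed.

Section S_H.
Variable K : fieldType.
Local Notation P := {mpoly K[6]}.
Hypothesis ch0 : [pchar K] =i pred0.

Lemma pts_exist d1 d2 d3 (A : 'I_d1 -> P) (B : 'I_d2 -> P) (C : 'I_d3 -> P) U3 U2 U1 :
  var_of_lines A B C U3 U2 U1 ->
  exists pt : nat -> nat -> K * K,
    [/\ forall h, (h < 3)%N -> forall u w, u != w -> dt (pt h u) (pt h w) != 0,
        forall u, A u = ell pt 0 u, forall u, B u = ell pt 1 u & forall u, C u = ell pt 2 u].
Proof.
move=> [[lA [lB lC]] [dA [dB dC]] _].
have [qa [qaP qaE]] := ext_dir ch0 lA dA.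
have [qb [qbP qbE]] := ext_dir ch0 lB dB.
have [qc [qcP qcE]] := ext_dir ch0 lC dC.
exists (fun h => if h == 0%N then qa else if h == 1%N then qb else qc); split.
- by move=> h hh u w; case: h hh => [|[|[|]]] // _ /=; [apply: qaP | apply: qbP | apply: qcP].
- by move=> u; rewrite qaE.
- by move=> u; rewrite qbE.
- by move=> u; rewrite qcE.
Qed.

End S_H.

Section S_H2.
Variable K : fieldType.
Local Notation P := {mpoly K[6]}.
Variable pt : nat -> nat -> K * K.
Hypothesis PT : forall h, (h < 3)%N -> forall u w, u != w -> dt (pt h u) (pt h w) != 0.
Variables (d1 d2 d3 : nat) (A : 'I_d1 -> P) (B : 'I_d2 -> P) (C : 'I_d3 -> P).
Variables (U3 : {set 'I_d1 * 'I_d2}) (U2 : {set 'I_d1 * 'I_d3}) (U1 : {set 'I_d2 * 'I_d3}).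
Hypothesis hA : forall u, A u = ell pt 0 u.
Hypothesis hB : forall u, B u = ell pt 1 u.
Hypothesis hC : forall u, C u = ell pt 2 u.
Hypothesis dU3 : down_closed U3.
Hypothesis dU2 : down_closed U2.
Hypothesis dU1 : down_closed U1.

Local Notation hatD := (minimal_elts (DX (min_gen_deg (lines_ideal A B U3))
                               (min_gen_deg (lines_ideal A C U2))
                               (min_gen_deg (lines_ideal B C U1)))).

Lemma upset (d : tri) : (exists e, hatD e /\ tle e d) <-> TT U3 U2 U1 d.
Proof.
split.
  move=> [e [[[a3 [b3 [a2 [c2 [b1 [c1 [D3 D2 D1 ->]]]]]]] _] le]].
  have n3 := MGa PT (isT : (0 < 1)%N) (isT : (1 < 3)%N) hA hB dU3 D3.
  have n2 := MGa PT (isT : (0 < 2)%N) (isT : (2 < 3)%N) hA hC dU2 D2.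
  have n1 := MGa PT (isT : (1 < 2)%N) (isT : (2 < 3)%N) hB hC dU1 D1.
  move: le; rewrite /tle /= => /and3P [l1 l2 l3].
  rewrite /TT; apply/and3P; split.
  - apply: contra n3 => i; apply: (inU_dc (isT : (0 < 1)%N) (isT : (1 < 3)%N) dU3 i) => /=; lia.
  - apply: contra n2 => i; apply: (inU_dc (isT : (0 < 1)%N) (isT : (1 < 3)%N) dU2 i) => /=; lia.
  - apply: contra n1 => i; apply: (inU_dc (isT : (0 < 1)%N) (isT : (1 < 3)%N) dU1 i) => /=; lia.
move=> /and3P [n3 n2 n1].
have [[[a3 b3] z3] [D3 l31 l32 z3P]] := MGb PT (isT : (0 < 1)%N) (isT : (1 < 3)%N) hA hB dU3 n3.
have [[[a2 z2] c2] [D2 l21 l22 z2P]] := MGb PT (isT : (0 < 2)%N) (isT : (2 < 3)%N) hA hC dU2 n2.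
have [[[z1 b1] c1] [D1 l11 l12 z1P]] := MGb PT (isT : (1 < 2)%N) (isT : (2 < 3)%N) hB hC dU1 n1.
have e3 : z3 = 0%N by apply: (z3P 2%N).
have e2 : z2 = 0%N by apply: (z2P 1%N).
have e1 : z1 = 0%N by apply: (z1P 0%N).
subst z3 z2 z1.
have [e [me le]] := @exists_min (DX (min_gen_deg (lines_ideal A B U3))
                               (min_gen_deg (lines_ideal A C U2))
                               (min_gen_deg (lines_ideal B C U1)))
  (maxn a3 a2, maxn b3 b1, maxn c1 c2) ltac:(by exists a3, b3, a2, c2, b1, c1).
exists e; split => //; apply: tle_trans le _.
move: l31 l32 l21 l22 l11 l12 => /= *; rewrite /tle /=; apply/and3P; split; lia.
Qed.

End S_H2.

Theorem corollary4p4 (K : closedFieldType) (d1 d2 d3 : nat)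
  (A : 'I_d1 -> {mpoly K[6]}) (B : 'I_d2 -> {mpoly K[6]})
  (C : 'I_d3 -> {mpoly K[6]})
  (U3 : {set 'I_d1 * 'I_d2}) (U2 : {set 'I_d1 * 'I_d3})
  (U1 : {set 'I_d2 * 'I_d3}) :
  [pchar K] =i pred0 ->
  var_of_lines A B C U3 U2 U1 ->
  down_closed U3 -> down_closed U2 -> down_closed U1 ->
  let IX := fun p => [/\ lines_ideal A B U3 p, lines_ideal A C U2 p
                       & lines_ideal B C U1 p] in
  let hatD := minimal_elts (DX (min_gen_deg (lines_ideal A B U3))
                               (min_gen_deg (lines_ideal A C U2))
                               (min_gen_deg (lines_ideal B C U1))) in
  forall d : tri,
    ((exists e, hatD e /\ tle e d) -> DeltaH IX d = 0) /\
    (~ (exists e, hatD e /\ tle e d) -> DeltaH IX d = 1).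
Proof.
move=> ch0 vl dU3 dU2 dU1 IX0 hatD0 d.
have [pt [PT hA hB hC]] := pts_exist ch0 vl.
have E : DeltaH IX0 d = fT U3 U2 U1 d.1.1 d.1.2 d.2 := DeltaH_IX PT hA hB hC dU3 dU2 dU1 d.
have UP := upset PT hA hB hC dU3 dU2 dU1 d.
have ed : (d.1.1, d.1.2, d.2) = d by case: d {E UP} => [[? ?] ?].
rewrite E /fT ed; split => H.
  by have := UP.1 H => ->.
have : TT U3 U2 U1 d = false by apply/negP => /UP.2.
by move=> ->.
Qed.
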